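(* Let $\nu\ge1$, let $\mathbf{F}_Q\in\mathbb{R}^{\nu\times\nu}$ be symmetric positive semidefinite, $\eta>0$, $\tilde{\mathbf{F}}_Q^{-1}:=(\mathbf{F}_Q+\eta\,\mathrm{Id}_\nu)^{-1}$, and $\underline g\in\mathbb{R}^\nu$. Let $\mathcal H$ be a Hermitian operator on $N$ qubits, $d=2^N$, and let $f_F,f_g>0$ be constants. Define the error-propagation coefficients $a_{kl}:=\sum_{i,j=1}^{\nu}[\tilde{\mathbf{F}}_Q^{-1}]_{ik}^2[\tilde{\mathbf{F}}_Q^{-1}]_{lj}^2\,g_l^2$ and $b_l:=\sum_{k=1}^\nu [\tilde{\mathbf{F}}_Q^{-1}]_{kl}^2$. Suppose each entry $[\mathbf{F}_Q]_{kl}$ is estimated from independent single-shot measurements with single-shot variance $V_{kl}\le f_F$, and each entry $g_l$ from independent single-shot measurements with single-shot variance $W_l\le \mathrm{Spc}[\mathcal H]\,f_g$. Suppose $N_F$ measurements are distributed uniformly over the $\nu^2$ matrix entries ($N_F/\nu^2$ each) and $N_g$ measurements uniformly over the $\nu$ gradient entries ($N_g/\nu$ each), so that the squared error of $\underline v=\tilde{\mathbf{F}}_Q^{-1}\underline g$ is $\epsilon^2=\epsilon_F^2+\epsilon_g^2$ with $\epsilon_F^2=\frac{\nu^2}{N_F}\sum_{k,l}a_{kl}V_{kl}$ and $\epsilon_g^2=\frac{\nu}{N_g}\sum_l b_lW_l$. Given $\epsilon>0$, let $N_F$ and $N_g$ be the numbers of measurements for which $\epsilon_F^2=\epsilon^2/2$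 and $\epsilon_g^2=\epsilon^2/2$ (so the total precision is $\epsilon$ at total cost $N_F+N_g$). Then $$N_F\le 2\,\epsilon^{-2}\nu^4\,\mathrm{Spc}[\tilde{\mathbf{F}}_Q^{-1}]^2\,\lVert g\rVert_\infty^2\,f_F,\qquad N_g\le 2\,\epsilon^{-2}\nu^2\,\mathrm{Spc}[\tilde{\mathbf{F}}_Q^{-1}]\,\mathrm{Spc}[\mathcal H]\,f_g.$$
   Context: For $A\in\mathbb{C}^{m\times m}$, $\mathrm{Spc}[A]:=\lVert A\rVert_F^2/m$ is the average of the squared singular values, where $\lVert\cdot\rVert_F$ is the Hilbert–Schmidt (Frobenius) norm; in particular $\mathrm{Spc}[\mathcal H]=\mathrm{Tr}[\mathcal H^2]/d$. $\lVert g\rVert_\infty=\max_l|g_l|$. In the paper's application $\mathbf{F}_Q$ is the quantum Fisher information matrix of a parametrised quantum state, $\underline g$ is the gradient of the energy $\mathrm{Tr}[\rho(\underline\theta)\mathcal H]$, and $f_F,f_g$ are setup-dependent constants bounding single-shot variances; the error model above is the paper's first-order error-propagation formula for $\epsilon^2=\sum_k\mathrm{Var}[v_k]$. *)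

(* Defs.v *)
From HB Require Import structures.
From mathcomp Require Import all_boot all_order all_algebra.
From mathcomp Require Import complex.
Set Implicit Arguments. Unset Strict Implicit. Unset Printing Implicit Defensive.
Import Order.TTheory GRing.Theory Num.Theory.
Local Open Scope ring_scope.

Definition Spc (R : realFieldType) (m : nat) (A : 'M[R]_m) : R :=
  (\sum_(i < m) \sum_(j < m) (A i j) ^+ 2) / m%:R.

Definition sqmod (R : rcfType) (z : R[i]) : R :=
  let: Complex a b := z in a ^+ 2 + b ^+ 2.

(* Spc[H] = ||H||_F^2 / m for a complex m x m matrix (= Tr[H^2]/m for Hermitian H) *)
Definition SpcC (R : rcfType) (m : nat) (H : 'M[R[i]]_m) : R :=
  (\sum_(i < m) \sum_(j < m) sqmod (H i j)) / m%:R.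

Definition herm_mx (R : rcfType) (m : nat) (H : 'M[R[i]]_m) : Prop :=
  forall i j, H j i = Num.conj (H i j).

Definition sym_mx (R : realFieldType) (m : nat) (A : 'M[R]_m) : Prop :=
  A^T = A.

Definition psd (R : realFieldType) (m : nat) (A : 'M[R]_m) : Prop :=
  forall x : 'cV[R]_m, 0 <= (x^T *m A *m x) 0 0.

Definition supnorm (R : realFieldType) (m : nat) (g : 'cV[R]_m) : R :=
  \big[Num.max/0]_(l < m) `|g l 0|.

Definition reg_inv (R : realFieldType) (m : nat) (F : 'M[R]_m) (eta : R) : 'M[R]_m :=
  invmx (F + eta%:M).

Definition coef_a (R : realFieldType) (m : nat) (Fi : 'M[R]_m) (g : 'cV[R]_m)
  (k l : 'I_m) : R :=
  \sum_(i < m) \sum_(j < m) (Fi i k) ^+ 2 * (Fi l j) ^+ 2 * (g l 0) ^+ 2.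

Definition coef_b (R : realFieldType) (m : nat) (Fi : 'M[R]_m) (l : 'I_m) : R :=
  \sum_(k < m) (Fi k l) ^+ 2.

Definition errF (R : realFieldType) (m : nat) (Fi : 'M[R]_m) (g : 'cV[R]_m)
  (V : 'M[R]_m) (NF : R) : R :=
  (m%:R ^+ 2 / NF) * \sum_(k < m) \sum_(l < m) coef_a Fi g k l * V k l.

Definition errg (R : realFieldType) (m : nat) (Fi : 'M[R]_m)
  (W : 'cV[R]_m) (Ng : R) : R :=
  (m%:R / Ng) * \sum_(l < m) coef_b Fi l * W l 0.

(* Main.v *)
Require Import Defs.
From HB Require Import structures.
From mathcomp Require Import all_boot all_order all_algebra.
From mathcomp Require Import complex.
From mathcomp Require Import ring lra.
Import Order.TTheory GRing.Theory Num.Theory.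
Local Open Scope ring_scope.

Lemma supnorm_ge (R : realFieldType) (m : nat) (g : 'cV[R]_m) (l : 'I_m) :
  `|g l 0| <= supnorm g.
Proof.
rewrite /supnorm.
have : l \in index_enum 'I_m by rewrite mem_index_enum.
elim: (index_enum 'I_m) => [//|x s IH]; rewrite inE big_cons.
case/orP => [/eqP->|/IH h]; first by rewrite le_max lexx.
by rewrite le_max h orbT.
Qed.

Lemma sq_le_supnorm (R : realFieldType) (m : nat) (g : 'cV[R]_m) (l : 'I_m) :
  (g l 0) ^+ 2 <= (supnorm g) ^+ 2.
Proof.
rewrite -real_normK ?num_real // !expr2.
by apply: ler_pM => //; apply: supnorm_ge.
Qed.

Lemma sumsq_ge0 (R : realFieldType) (m : nat) (M : 'M[R]_m) :
  0 <= \sum_(i < m) \sum_(j < m) (M i j) ^+ 2.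
Proof. by apply: sumr_ge0 => i _; apply: sumr_ge0 => j _; apply: sqr_ge0. Qed.

Lemma boundA (R : realFieldType) (m : nat) (M : 'M[R]_m) (g : 'cV[R]_m)
  (V : 'M[R]_m) (fF : R) :
  0 <= fF -> (forall k l, 0 <= V k l <= fF) ->
  \sum_(k < m) \sum_(l < m) coef_a M g k l * V k l <=
  (\sum_(i < m) \sum_(j < m) (M i j) ^+ 2) ^+ 2 * ((supnorm g) ^+ 2 * fF).
Proof.
move=> hF hV.
apply: (@le_trans _ _ (\sum_(k < m) \sum_(l < m)
   (\sum_(i < m) \sum_(j < m) (M i k) ^+ 2 * (M l j) ^+ 2) * ((supnorm g) ^+ 2 * fF))).
  apply: ler_sum => k _; apply: ler_sum => l _.
  rewrite /coef_a.
  have -> : \sum_(i < m) \sum_(j < m) M i k ^+ 2 * M l j ^+ 2 * g l 0 ^+ 2 =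
            (\sum_(i < m) \sum_(j < m) M i k ^+ 2 * M l j ^+ 2) * g l 0 ^+ 2.
    rewrite mulr_suml; apply: eq_bigr => i _; rewrite mulr_suml; done.
  rewrite -mulrA; apply: ler_pM.
  - by apply: sumr_ge0 => i _; apply: sumr_ge0 => j _; rewrite mulr_ge0 ?sqr_ge0.
  - by rewrite mulr_ge0 ?sqr_ge0 //; case/andP: (hV k l).
  - by [].
  - have [h0 h1] := andP (hV k l).
    by apply: ler_pM; rewrite ?sqr_ge0 ?sq_le_supnorm.
under eq_bigr => k _ do rewrite -mulr_suml.
rewrite -mulr_suml.
apply: ler_wpM2r; first by rewrite mulr_ge0 ?sqr_ge0.
rewrite le_eqVlt; apply/orP; left; apply/eqP.

rewrite expr2 [X in _ = X * _]exchange_big /= mulr_suml; apply: eq_bigr => k _.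
rewrite exchange_big /= mulr_suml; apply: eq_bigr => i _.
rewrite mulr_sumr; apply: eq_bigr => l _.
by rewrite mulr_sumr.
Qed.

Theorem theorem1 (R : rcfType) (nu N : nat) (F : 'M[R]_nu) (eta : R)
  (g : 'cV[R]_nu) (H : 'M[R[i]]_(2 ^ N)) (fF fg : R)
  (V : 'M[R]_nu) (W : 'cV[R]_nu) (eps NF Ng : R) :
  (0 < nu)%N ->
  sym_mx F -> psd F -> 0 < eta ->
  herm_mx H -> 0 < fF -> 0 < fg ->
  (forall k l, 0 <= V k l <= fF) ->
  (forall l, 0 <= W l 0 <= SpcC H * fg) ->
  0 < eps -> 0 < NF -> 0 < Ng ->
  errF (reg_inv F eta) g V NF = eps ^+ 2 / 2 ->
  errg (reg_inv F eta) W Ng = eps ^+ 2 / 2 ->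
  NF <= 2 * eps ^- 2 * nu%:R ^+ 4 * (Spc (reg_inv F eta)) ^+ 2
          * (supnorm g) ^+ 2 * fF /\
  Ng <= 2 * eps ^- 2 * nu%:R ^+ 2 * Spc (reg_inv F eta) * SpcC H * fg.
Proof.
move=> nu0 _ _ _ _ fF0 fg0 hV hW eps0 NF0 Ng0.
rewrite /errF /errg /Spc.
set M := reg_inv F eta.
set T := \sum_(i < nu) \sum_(j < nu) (M i j) ^+ 2.
set A := \sum_(k < nu) \sum_(l < nu) coef_a M g k l * V k l.
set B := \sum_(l < nu) coef_b M l * W l 0.
set G := supnorm g. set S := SpcC H.
move=> hEF hEg.
have nuP : (0 : R) < nu%:R by rewrite ltr0n.
have nu0' : nu%:R != 0 :> R by rewrite gt_eqF.
have NF0' : NF != 0 by rewrite gt_eqF.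
have Ng0' : Ng != 0 by rewrite gt_eqF.
have e0' : eps != 0 by rewrite gt_eqF.
have hA : A <= T ^+ 2 * (G ^+ 2 * fF) by apply: boundA => //; apply: ltW.
have hB : B <= T * S * fg.
  rewrite /B /T -mulrA exchange_big /= mulr_suml.
  apply: ler_sum => l _; rewrite /coef_b.
  apply: ler_wpM2l; first by apply: sumr_ge0 => k _; apply: sqr_ge0.
  by have /andP[_ h] := hW l; exact: h.
have c0 : 0 <= 2 * eps ^- 2 * nu%:R ^+ 2.
  by rewrite mulr_ge0 // ?mulr_ge0 // ?invr_ge0 ?exprn_ge0 // ltW.
split.
  have eNF : NF = 2 * eps ^- 2 * nu%:R ^+ 2 * A.
    have h : nu%:R ^+ 2 * A = eps ^+ 2 / 2 * NF by rewrite -hEF; field.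
    rewrite -mulrA h; field; done.
  have -> : 2 * eps ^- 2 * nu%:R ^+ 4 * (T / nu%:R) ^+ 2 * G ^+ 2 * fF
     = 2 * eps ^- 2 * nu%:R ^+ 2 * (T ^+ 2 * (G ^+ 2 * fF)).
    by field; rewrite e0' nu0'.
  by rewrite {1}eNF; apply: ler_wpM2l.
have eNg : Ng = 2 * eps ^- 2 * nu%:R * B.
  have h : nu%:R * B = eps ^+ 2 / 2 * Ng by rewrite -hEg; field.
  rewrite -mulrA h; field; done.
have -> : 2 * eps ^- 2 * nu%:R ^+ 2 * (T / nu%:R) * S * fg
   = 2 * eps ^- 2 * nu%:R * (T * S * fg) by field; rewrite e0' nu0'.
rewrite {1}eNg; apply: ler_wpM2l => //.
by rewrite mulr_ge0 // ?mulr_ge0 // ?invr_ge0 ?exprn_ge0 // ltW.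
Qed.
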